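(* Let $q$ be a power of $2$, $n\ge 2$, and let $M=(m_{ij})$ be an $n\times n$ matrix with entries in $\mathbb{F}_q$. (a) $\mathrm{Num}'_0(M)_q\neq\emptyset$, and either $0\in\mathrm{Num}'_0(M)$ or $\mathrm{Num}_0(M)\supseteq\mathbb{F}_q^*$. (b) $\mathrm{Num}'_0(M)_q=\{0\}$ if and only if $m_{ii}+m_{ij}+m_{ji}+m_{jj}=0$ for all $1\le i<j\le n$. (c) Assume $\mathrm{Num}'_0(M)_q\neq\{0\}$. If $n=2$ then $\mathrm{Num}'_0(M)_q=\mathbb{F}_q^*$; if $n=3$ then $\mathrm{Num}'_0(M)_q\supseteq\mathbb{F}_q^*$; if $n\ge 4$ then $\mathrm{Num}'_0(M)_q=\mathbb{F}_q$.
   Context: The Hermitian form on $\mathbb{F}_{q^2}^n$ is $\langle u,v\rangle=\sum_i u_i^q v_i$. For an $n\times n$ matrix $M$ over $\mathbb{F}_{q^2}$: $\mathrm{Num}_0(M)=\{\langle u,Mu\rangle: u\in\mathbb{F}_{q^2}^n,\ \langle u,u\rangle=0\}$ and $\mathrm{Num}'_0(M)=\{\langle u,Mu\rangle: u\in\mathbb{F}_{q^2}^n\setminus\{0\},\ \langle u,u\rangle=0\}$. For $M$ with entries in $\mathbb{F}_q$: $\mathrm{Num}'_0(M)_q=\{\langle u,Mu\rangle: u\in\mathbb{F}_q^n\setminus\{0\},\ \langle u,u\rangle=0\}$; for $u=(x_1,\dots,x_n)\in\mathbb{F}_q^n$, $\langle u,u\rangle=\sum x_i^2$ and $\langle u,Mu\rangle=\sum_{i,j}m_{ij}x_ix_j$.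 *)

(* Defs.v *)
From HB Require Import structures.
From mathcomp Require Import all_boot all_order all_algebra.
Set Implicit Arguments. Unset Strict Implicit. Unset Printing Implicit Defensive.
Import GRing.Theory.
Local Open Scope ring_scope.

(* L plays the role of F_{q^2} (a finite field with q^2 elements);
   F_q is its unique subfield of order q, namely {x | x^q = x}. *)

Section Defs.
Variables (L : finFieldType) (q n : nat).

Definition Fq : {set L} := [set x : L | x ^+ q == x].
Definition Fqstar : {set L} := Fq :\ 0.

Definition herm (u v : 'cV[L]_n) : L := \sum_(i < n) (u i 0) ^+ q * v i 0.

Definition inFqn (u : 'cV[L]_n) : bool := [forall i, u i 0 \in Fq].

Definition Num0 (M : 'M[L]_n) : {set L} :=
  [set herm u (M *m u) | u in [set u : 'cV[L]_n | herm u u == 0]].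
Definition Num0' (M : 'M[L]_n) : {set L} :=
  [set herm u (M *m u) | u in [set u : 'cV[L]_n | (u != 0) && (herm u u == 0)]].
Definition Num0'q (M : 'M[L]_n) : {set L} :=
  [set herm u (M *m u) |
     u in [set u : 'cV[L]_n | [&& inFqn u, u != 0 & herm u u == 0]]].
End Defs.

(* Main.v *)
Require Import Defs.
From HB Require Import structures.
From mathcomp Require Import all_boot all_order all_algebra.
From mathcomp Require Import all_field ring zify.
Import GRing.Theory.
Local Open Scope ring_scope.

Set Implicit Arguments. Unset Strict Implicit. Unset Printing Implicit Defensive.

Section Char2.
Variable L : fieldType.
Hypothesis two0 : (2%:R : L) = 0.

Lemma addxx (x : L) : x + x = 0.
Proof. by rewrite -mulr2n -mulr_natr two0 mulr0. Qed.

Lemma addK2 (x y : L) : x + y = 0 -> x = y.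
Proof. by move=> h; rewrite -[y]add0r -h -addrA addxx addr0. Qed.

Lemma sqrD (x y : L) : (x + y) ^+ 2 = x ^+ 2 + y ^+ 2.
Proof.
have -> : (x + y) ^+ 2 = x ^+ 2 + y ^+ 2 + 2%:R * (x * y) by ring.
by rewrite two0 mul0r addr0.
Qed.

Lemma pow2D (k : nat) (x y : L) : (x + y) ^+ (2 ^ k) = x ^+ (2 ^ k) + y ^+ (2 ^ k).
Proof.
elim: k x y => [|k IH] x y; first by rewrite !expr1.
by rewrite expnS !exprM sqrD IH.
Qed.

Lemma pair_sum n (f : 'I_n -> 'I_n -> L) :
  (forall i j, f i j + f j i = 0) -> (forall i, f i i = 0) ->
  \sum_i \sum_j f i j = 0.
Proof.
elim: n f => [|n IH] f h1 h2; first by rewrite big_ord0.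
rewrite big_ord_recr /= big_ord_recr /= h2 addr0.
under eq_bigr => i _ do rewrite big_ord_recr /=.
rewrite big_split /= IH //= add0r -big_split /=.
by apply: big1 => i _; rewrite h1.
Qed.
End Char2.


Section Fq.
Variable L : finFieldType.
Variable k : nat.
Hypothesis hk : (0 < k)%N.
Hypothesis two0 : (2%:R : L) = 0.
Local Notation q := (2 ^ k)%N.
Local Notation F := (Fq L q).

Lemma FqE x : (x \in F) = (x ^+ q == x).
Proof. by rewrite inE. Qed.

Lemma Fq0 : 0 \in F. Proof. by rewrite FqE expr0n expn_eq0. Qed.
Lemma Fq1 : 1 \in F. Proof. by rewrite FqE expr1n. Qed.
Lemma FqD x y : x \in F -> y \in F -> x + y \in F.
Proof. by rewrite !FqE pow2D // => /eqP-> /eqP->. Qed.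
Lemma FqM x y : x \in F -> y \in F -> x * y \in F.
Proof. by rewrite !FqE exprMn => /eqP-> /eqP->. Qed.
Lemma FqV x : x \in F -> x^-1 \in F.
Proof. by rewrite !FqE exprVn => /eqP->. Qed.
Lemma FqX x m : x \in F -> x ^+ m \in F.
Proof. by rewrite !FqE -exprM mulnC exprM => /eqP->. Qed.
Lemma Fq_sum (I : finType) (f : I -> L) : (forall i, f i \in F) -> \sum_i f i \in F.
Proof. by move=> h; apply: (big_ind (fun x => x \in F)) => //; [exact: Fq0 | exact: FqD]. Qed.

Definition sqrtq (x : L) := x ^+ (2 ^ k.-1).
Lemma sqrtqK x : x \in F -> sqrtq x ^+ 2 = x.
Proof.
rewrite FqE => /eqP h; rewrite /sqrtq -exprM -expnSr prednK //.
Qed.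
Lemma Fq_sqrt x : x \in F -> sqrtq x \in F.
Proof. exact: FqX. Qed.

Variable n : nat.
Definition P (N : 'M[L]_n) (x y : 'cV[L]_n) := \sum_i x i 0 * (N *m y) i 0.

Lemma PDl N x y z : P N (x + y) z = P N x z + P N y z.
Proof. by rewrite /P -big_split; apply: eq_bigr => i _; rewrite mxE mulrDl. Qed.
Lemma PDr N x y z : P N x (y + z) = P N x y + P N x z.
Proof. by rewrite /P -big_split; apply: eq_bigr => i _; rewrite mulmxDr mxE mulrDr. Qed.
Lemma PZl N a x z : P N (a *: x) z = a * P N x z.
Proof. by rewrite /P big_distrr; apply: eq_bigr => i _; rewrite mxE -mulrA. Qed.
Lemma PZr N a x z : P N x (a *: z) = a * P N x z.
Proof. by rewrite /P big_distrr; apply: eq_bigr => i _; rewrite -scalemxAr mxE mulrCA. Qed.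

Definition ev (i : 'I_n) : 'cV[L]_n := delta_mx i 0.
Lemma evE i j : ev i j 0 = (j == i)%:R.
Proof. by rewrite /ev mxE andbT. Qed.
Lemma Pev N i j : P N (ev i) (ev j) = N i j.
Proof.
rewrite /P (bigD1 i) //= big1 ?addr0 => [|l /negPf hl]; last by rewrite evE hl mul0r.
by rewrite evE eqxx mul1r -colE mxE.
Qed.

Definition Q (N : 'M[L]_n) (u : 'cV[L]_n) := \sum_i \sum_j u i 0 * N i j * u j 0.
Lemma PQ N u : P N u u = Q N u.
Proof.
rewrite /P /Q; apply: eq_bigr => i _; rewrite mxE big_distrr; apply: eq_bigr => j _.
by rewrite -mulrA.
Qed.

Lemma hermP (N : 'M[L]_n) u v : inFqn q u -> herm q u (N *m v) = P N u v.
Proof.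
move=> /forallP hu; rewrite /herm /P; apply: eq_bigr => i _.
by have := hu i; rewrite FqE => /eqP->.
Qed.

Lemma hermQ N u : inFqn q u -> herm q u (N *m u) = Q N u.
Proof. by move=> h; rewrite hermP // PQ. Qed.

Lemma herm_iso (u : 'cV[L]_n) : inFqn q u -> (herm q u u == 0) = (\sum_(i < n) u i 0 == 0).
Proof.
move=> h; have := (@hermP 1%:M u u h); rewrite mul1mx => ->; rewrite PQ /Q.
have -> : \sum_i \sum_j u i 0 * (1%:M : 'M[L]_n) i j * u j 0 = \sum_i u i 0 ^+ 2.
  apply: eq_bigr => i _ /=.
  rewrite (bigD1 i) //= big1 ?addr0 => [|j /negPf hj].
    by rewrite mxE eqxx mulr1 expr2.
  by rewrite mxE eq_sym hj mulr0 mul0r.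
have e0 : (0 : L) ^+ 2 = 0 by rewrite expr2 mulr0.
rewrite -(big_morph (fun x : L => x ^+ 2) (@sqrD _ two0) e0).
by rewrite expf_eq0.
Qed.

Lemma inFqnP (u : 'cV[L]_n) : reflect (forall i, u i 0 \in F) (inFqn q u).
Proof. exact: forallP. Qed.

Lemma inFqnD (u v : 'cV[L]_n) : inFqn q u -> inFqn q v -> inFqn q (u + v).
Proof. by move=> /inFqnP hu /inFqnP hv; apply/inFqnP => i; rewrite mxE FqD. Qed.
Lemma inFqnZ a (u : 'cV[L]_n) : a \in F -> inFqn q u -> inFqn q (a *: u).
Proof. by move=> ha /inFqnP hu; apply/inFqnP => i; rewrite mxE FqM. Qed.
Lemma inFqn_ev i : inFqn q (ev i).
Proof. by apply/inFqnP => j; rewrite evE; case: (j == i); [exact: Fq1|exact: Fq0]. Qed.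

Lemma FqP (N : 'M[L]_n) x y : (forall i j, N i j \in F) -> inFqn q x -> inFqn q y -> P N x y \in F.
Proof.
move=> hN /inFqnP hx /inFqnP hy; apply: Fq_sum => i; rewrite FqM // mxE.
by apply: Fq_sum => j; rewrite FqM.
Qed.

End Fq.


Section Tern.
Variable L : finFieldType.
Variable k : nat.
Hypothesis hk : (0 < k)%N.
Hypothesis two0 : (2%:R : L) = 0.
Local Notation q := (2 ^ k)%N.
Local Notation F := (Fq L q).

Definition q3 (A B C D E G a b c : L) :=
  A * a ^+ 2 + B * b ^+ 2 + C * c ^+ 2 + D * a * b + E * a * c + G * b * c.

Lemma q3_shift A B C D E G t v1 v2 v3 :
  q3 A B C D E G (t * G + v1) (t * E + v2) (t * D + v3) =
  t ^+ 2 * q3 A B C D E G G E D + q3 A B C D E G v1 v2 v3.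
Proof.
rewrite /q3.
set X := (_ + _ + _ + _ + _ + _).
have -> : X = t ^+ 2 * (A * G ^+ 2 + B * E ^+ 2 + C * D ^+ 2 + D * G * E + E * G * D + G * E * D) +
   (A * v1 ^+ 2 + B * v2 ^+ 2 + C * v3 ^+ 2 + D * v1 * v2 + E * v1 * v3 + G * v2 * v3) +
   2%:R * (t * (A * G * v1 + B * E * v2 + C * D * v3 + D * G * v2 + D * E * v1 + E * G * v3)).
  rewrite /X; ring.
by rewrite two0 mul0r addr0.
Qed.

Lemma tern A B C D E G : A \in F -> B \in F -> C \in F -> D \in F -> E \in F -> G \in F ->
  exists a b c, [/\ a \in F, b \in F, c \in F,
     (a != 0) || (b != 0) || (c != 0) & q3 A B C D E G a b c = 0].
Proof.
move=> hA hB hC hD hE hG.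
have hq3 : forall a b c, a \in F -> b \in F -> c \in F -> q3 A B C D E G a b c \in F.
  by move=> a b c ha hb hc; rewrite /q3 !(FqD two0) // !FqM // FqX.
have [/and3P [/eqP D0 /eqP E0 /eqP G0] | hr] := boolP [&& D == 0, E == 0 & G == 0].
  have [A0 | Anz] := eqVneq A 0.
    exists 1, 0, 0; split; [exact: Fq1 | exact: Fq0 | exact: Fq0 | by rewrite oner_eq0 |].
    by rewrite /q3 A0 D0 E0 G0; ring.
  exists (sqrtq k (B / A)), 1, 0; split.
  - by apply: Fq_sqrt; rewrite FqM // FqV.
  - exact: Fq1.
  - exact: Fq0.
  - by rewrite oner_eq0 orbT.
  rewrite /q3 (sqrtqK hk); last by rewrite FqM ?FqV.
  rewrite D0 E0 G0 mulrC divfK //.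
  by rewrite -[RHS](addxx two0 B); ring.
have [c0 | c0nz] := eqVneq (q3 A B C D E G G E D) 0.
  exists G, E, D; split => //.
  by move: hr; rewrite -!negb_and; case: (D == 0); case: (E == 0); case: (G == 0).
have [G0 | Gnz] := eqVneq G 0.
  set t := sqrtq k (q3 A B C D E G 1 0 0 / q3 A B C D E G G E D).
  have ht : t \in F by apply: Fq_sqrt; rewrite FqM ?FqV ?hq3 //; [exact: Fq1 | exact: Fq0 | exact: Fq0].
  exists (t * G + 1), (t * E + 0), (t * D + 0); split.
  - by rewrite (FqD two0) ?FqM //; exact: Fq1.
  - by rewrite (FqD two0) ?FqM //; exact: Fq0.
  - by rewrite (FqD two0) ?FqM //; exact: Fq0.
  - by rewrite G0 mulr0 add0r oner_eq0.
  rewrite q3_shift (sqrtqK hk); last by rewrite FqM ?FqV ?hq3 //; [exact: Fq1 | exact: Fq0 | exact: Fq0].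
  by rewrite divfK // (addxx two0).
set t := sqrtq k (q3 A B C D E G 0 1 0 / q3 A B C D E G G E D).
have ht : t \in F by apply: Fq_sqrt; rewrite FqM ?FqV ?hq3 //; [exact: Fq0 | exact: Fq1 | exact: Fq0].
exists (t * G + 0), (t * E + 1), (t * D + 0); split.
- by rewrite (FqD two0) ?FqM //; exact: Fq0.
- by rewrite (FqD two0) ?FqM //; exact: Fq1.
- by rewrite (FqD two0) ?FqM //; exact: Fq0.
- have [t0 | tnz] := eqVneq t 0.
    by rewrite t0 !mul0r !add0r !eqxx oner_eq0 orbT.
  by rewrite addr0 mulf_neq0.
rewrite q3_shift (sqrtqK hk); last by rewrite FqM ?FqV ?hq3 //; [exact: Fq0 | exact: Fq1 | exact: Fq0].
by rewrite divfK // (addxx two0).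
Qed.
End Tern.


Section Main.
Variable L : finFieldType.
Variable k : nat.
Hypothesis hk : (0 < k)%N.
Hypothesis two0 : (2%:R : L) = 0.
Local Notation q := (2 ^ k)%N.
Local Notation F := (Fq L q).
Variable n : nat.
Variable M : 'M[L]_n.
Hypothesis hM : forall i j, M i j \in F.
Local Notation S := (Num0'q q M).
Local Notation e := (@ev L n).

Lemma memS c : reflect (exists u : 'cV[L]_n, [/\ inFqn q u, u != 0, \sum_i u i 0 = 0 & Q M u = c])
   (c \in S).
Proof.
apply: (iffP imsetP) => [[u] | [u [h1 h2 h3 h4]]].
  rewrite inE => /and3P [h1 h2 h3] ->; exists u; split => //.
    by apply/eqP; rewrite -(@herm_iso L k two0 n u h1).
  by rewrite hermQ.
exists u; last by rewrite hermQ.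
by rewrite inE h1 h2 (@herm_iso L k two0 n u h1) h3 eqxx.
Qed.

Lemma S_Fq c : c \in S -> c \in F.
Proof. by case/memS => u [h1 _ _ <-]; rewrite -PQ; apply: FqP. Qed.

Lemma sumD (x y : 'cV[L]_n) : \sum_i (x + y) i 0 = \sum_i x i 0 + \sum_i y i 0.
Proof. by rewrite -big_split; apply: eq_bigr => i _; rewrite mxE. Qed.
Lemma sumZ a (x : 'cV[L]_n) : \sum_i (a *: x) i 0 = a * \sum_i x i 0.
Proof. by rewrite big_distrr; apply: eq_bigr => i _; rewrite mxE. Qed.
Lemma sum_ev i : \sum_l e i l 0 = 1.
Proof.
rewrite (bigD1 i) //= big1 ?addr0 => [|l /negPf hl]; first by rewrite evE eqxx.
by rewrite evE hl.
Qed.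

Lemma QZ a u : Q M (a *: u) = a ^+ 2 * Q M u.
Proof. by rewrite -!PQ PZl PZr mulrA expr2. Qed.

Lemma S_scale c d : c \in S -> c != 0 -> d \in Fqstar L q -> d \in S.
Proof.
move=> /[dup] cS /memS [u [h1 h2 h3 h4]] cnz.
rewrite in_setD1 => /andP [dnz dF].
have cF := S_Fq cS.
have hdc : d / c \in F by rewrite FqM // FqV.
set t := sqrtq k (d / c).
have tF : t \in F by exact: Fq_sqrt.
have t2 : t ^+ 2 = d / c by exact: sqrtqK.
apply/memS; exists (t *: u); split.
- exact: inFqnZ.
- rewrite scalemx_eq0 negb_or h2 andbT; apply: contra dnz => /eqP t0.
  have : d / c == 0 by rewrite -t2 t0 expr2 mul0r.
  by rewrite mulf_eq0 invr_eq0 (negPf cnz) orbF.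
- by rewrite sumZ h3 mulr0.
by rewrite QZ t2 h4 divfK.
Qed.

Lemma Qpair (i j : 'I_n) : Q M (e i + e j) = M i i + M i j + M j i + M j j.
Proof. rewrite -PQ !PDl !PDr !Pev; ring. Qed.

Lemma pairS (i j : 'I_n) : i != j -> M i i + M i j + M j i + M j j \in S.
Proof.
move=> hij; apply/memS; exists (e i + e j); split.
- by apply: (inFqnD two0); apply: inFqn_ev.
- apply/negP => /eqP/matrixP/(_ i 0); rewrite mxE !evE eqxx (negPf hij) /=.
  by rewrite addr0 mxE => /eqP; rewrite oner_eq0.
- by rewrite sumD !sum_ev (addxx two0).
exact: Qpair.
Qed.

Lemma partb_r : (forall i j : 'I_n, (i < j)%N -> M i i + M i j + M j i + M j j = 0) ->
  forall u : 'cV[L]_n, \sum_i u i 0 = 0 -> Q M u = 0.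
Proof.
move=> h u hu.
pose f i j := u i 0 * (M i j + M i i) * u j 0.
have -> : Q M u = \sum_i \sum_j f i j + \sum_i \sum_j u i 0 * M i i * u j 0.
  rewrite -big_split; apply: eq_bigr => i _; rewrite -big_split; apply: eq_bigr => j _.
  rewrite /f /=; transitivity (u i 0 * (M i j + M i i + M i i) * u j 0); first by rewrite -addrA (addxx two0) addr0.
  ring.
rewrite pair_sum ?add0r.
- rewrite big1 // => i _; rewrite -big_distrr /= hu mulr0 //.
- move=> i j; rewrite /f.
  have -> : u i 0 * (M i j + M i i) * u j 0 + u j 0 * (M j i + M j j) * u i 0 =
     u i 0 * u j 0 * (M i i + M i j + M j i + M j j) by ring.
  have [lt|gt|eq] := ltngtP i j.
  + by rewrite h // mulr0.
  + have -> : M i i + M i j + M j i + M j j = M j j + M j i + M i j + M i i by ring.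
    by rewrite h // mulr0.
  + have eij : i = j by apply: val_inj.
    by rewrite eij -!addrA (addxx two0) !addr0 (addxx two0) mulr0.
- by move=> i; rewrite /f (addxx two0) mulr0 mul0r.
Qed.
End Main.


Lemma I2 (i : 'I_2) : i = ord0 \/ i = ord_max.
Proof. by case: i => [[|[|m]] h]; [left; apply: val_inj | right; apply: val_inj | ]. Qed.

Lemma part_n2 (L : finFieldType) k (hk : (0 < k)%N) (two0 : (2%:R : L) = 0) (M : 'M[L]_2)
  (hM : forall i j, M i j \in Fq L (2 ^ k)) :
  Num0'q (2 ^ k) M != [set 0] -> Num0'q (2 ^ k) M = Fqstar L (2 ^ k).
Proof.
move=> hne.
have i01 : (ord0 : 'I_2) != ord_max by [].
set a := M ord0 ord0 + M ord0 ord_max + M ord_max ord0 + M ord_max ord_max.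
have aS : a \in Num0'q (2 ^ k) M := pairS k two0 M i01.
have anz : a != 0.
  apply: contra hne => /eqP a0; apply/eqP/setP => c; rewrite in_set1; apply/idP/eqP.
    case/(memS k two0) => u [h1 h2 h3 <-]; apply: (partb_r two0) => // i j lt.
    by move: lt; case: (I2 i) => ->; case: (I2 j) => ->.
  by move=> ->; rewrite -a0.
apply/setP => d; apply/idP/idP => [dS | dS].
  rewrite in_setD1 (S_Fq two0 hM dS) andbT.
  case/(memS k two0): dS => u [h1 h2 h3 <-].
  have hsum : u ord0 0 + u ord_max 0 = 0.
    rewrite -h3 (bigD1 ord0) //= (bigD1 ord_max) //= big1 ?addr0 // => i /andP [hi0 hi1].
    by case: (I2 i) hi0 hi1 => ->; rewrite eqxx.
  have hu1 := addK2 two0 hsum.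
  have -> : u = u ord0 0 *: (ev L ord0 + ev L ord_max).
    apply/matrixP => i j; rewrite (ord1 j) !mxE.
    by case: (I2 i) => ->; rewrite /= hu1; ring.
  rewrite QZ Qpair -/a mulf_neq0 // expf_neq0 //.
  apply: contra h2 => /eqP u0; apply/eqP/matrixP => i j; rewrite (ord1 j) mxE.
  by case: (I2 i) => ->; rewrite -?hu1 u0.
exact: (S_scale hk two0 hM aS anz dS).
Qed.

Lemma zero4 (L : finFieldType) k (hk : (0 < k)%N) (two0 : (2%:R : L) = 0) n (M : 'M[L]_n)
  (hM : forall i j, M i j \in Fq L (2 ^ k)) : (4 <= n)%N -> 0 \in Num0'q (2 ^ k) M.
Proof.
move=> hn.
have p0 : (0 < n)%N by lia.
have p1 : (1 < n)%N by lia.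
have p2 : (2 < n)%N by lia.
have p3 : (3 < n)%N by lia.
set i0 := Ordinal p0; set i1 := Ordinal p1; set i2 := Ordinal p2; set i3 := Ordinal p3.
set f1 := ev L i0 + ev L i1; set f2 := ev L i0 + ev L i2; set f3 := ev L i0 + ev L i3.
have hf1 : inFqn (2 ^ k) f1 by apply: (inFqnD two0); apply: inFqn_ev.
have hf2 : inFqn (2 ^ k) f2 by apply: (inFqnD two0); apply: inFqn_ev.
have hf3 : inFqn (2 ^ k) f3 by apply: (inFqnD two0); apply: inFqn_ev.
have s1 : \sum_i f1 i 0 = 0 by rewrite /f1 sumD !sum_ev (addxx two0).
have s2 : \sum_i f2 i 0 = 0 by rewrite /f2 sumD !sum_ev (addxx two0).
have s3 : \sum_i f3 i 0 = 0 by rewrite /f3 sumD !sum_ev (addxx two0).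
have e11 : f1 i1 0 = 1 by rewrite /f1 mxE !evE /= ?add0r ?addr0.
have e12 : f1 i2 0 = 0 by rewrite /f1 mxE !evE /= ?add0r ?addr0.
have e13 : f1 i3 0 = 0 by rewrite /f1 mxE !evE /= ?add0r ?addr0.
have e21 : f2 i1 0 = 0 by rewrite /f2 mxE !evE /= ?add0r ?addr0.
have e22 : f2 i2 0 = 1 by rewrite /f2 mxE !evE /= ?add0r ?addr0.
have e23 : f2 i3 0 = 0 by rewrite /f2 mxE !evE /= ?add0r ?addr0.
have e31 : f3 i1 0 = 0 by rewrite /f3 mxE !evE /= ?add0r ?addr0.
have e32 : f3 i2 0 = 0 by rewrite /f3 mxE !evE /= ?add0r ?addr0.
have e33 : f3 i3 0 = 1 by rewrite /f3 mxE !evE /= ?add0r ?addr0.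
clearbody f1 f2 f3.
have hP : forall x y, inFqn (2 ^ k) x -> inFqn (2 ^ k) y -> P M x y \in Fq L (2 ^ k).
  by move=> x y hx hy; apply: FqP.
have [a [b [c [ha hb hc hnz hq]]]] := tern hk two0 (hP _ _ hf1 hf1) (hP _ _ hf2 hf2) (hP _ _ hf3 hf3)
  (FqD two0 (hP _ _ hf1 hf2) (hP _ _ hf2 hf1)) (FqD two0 (hP _ _ hf1 hf3) (hP _ _ hf3 hf1))
  (FqD two0 (hP _ _ hf2 hf3) (hP _ _ hf3 hf2)).
apply/(memS k two0); exists (a *: f1 + b *: f2 + c *: f3); split.
- by apply: (inFqnD two0); [apply: (inFqnD two0)|]; apply: inFqnZ.
- have w1 : (a *: f1 + b *: f2 + c *: f3) i1 0 = a by rewrite !mxE e11 e21 e31; ring.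
  have w2 : (a *: f1 + b *: f2 + c *: f3) i2 0 = b by rewrite !mxE e12 e22 e32; ring.
  have w3 : (a *: f1 + b *: f2 + c *: f3) i3 0 = c by rewrite !mxE e13 e23 e33; ring.
  apply/negP => /eqP w0.
  have a0 : a = 0 by rewrite -w1 w0 mxE.
  have b0 : b = 0 by rewrite -w2 w0 mxE.
  have c0 : c = 0 by rewrite -w3 w0 mxE.
  by move: hnz; rewrite a0 b0 c0 eqxx.
- by rewrite !sumD !sumZ s1 s2 s3 !mulr0 !addr0.
rewrite -PQ !PDl !PDr !PZl !PZr -[RHS]hq /q3; ring.
Qed.


Unset Implicit Arguments. Set Strict Implicit. Set Printing Implicit Defensive.

Theorem proposition6 (L : finFieldType) (k n : nat) (M : 'M[L]_n) :
  (0 < k)%N -> #|L| = ((2 ^ k) ^ 2)%N -> (2 <= n)%N ->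
  (forall i j, M i j \in Fq L (2 ^ k)) ->
  let q := (2 ^ k)%N in
  (* (a) *)
  (Num0'q q M != set0 /\
   (0 \in Num0' q M \/ Fqstar L q \subset Num0 q M)) /\
  (* (b) *)
  (Num0'q q M = [set 0] <->
   (forall i j : 'I_n, (i < j)%N -> M i i + M i j + M j i + M j j = 0)) /\
  (* (c) *)
  (Num0'q q M != [set 0] ->
   (n = 2%N -> Num0'q q M = Fqstar L q) /\
   (n = 3%N -> Fqstar L q \subset Num0'q q M) /\
   ((4 <= n)%N -> Num0'q q M = Fq L q)).
Proof.
move=> hk hcard hn hM q; rewrite {}/q.
have two0 : (2%:R : L) = 0.
  apply: pcharf0; apply: (@card_finPcharP _ _ (k * 2)) => //.
  by rewrite hcard expnM.
set S := Num0'q _ M.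
have i0P : (0 < n)%N by lia.
have i1P : (1 < n)%N by lia.
set i0 := Ordinal i0P; set i1 := Ordinal i1P.
have i01 : i0 != i1 by [].
have Sne : S != set0.
  by apply/set0Pn; eexists; apply: (pairS k two0 M i01).
have nz_elt : S != [set 0] -> exists2 c, c \in S & c != 0.
  move=> hne; have : ~~ (S \subset [set 0]).
    apply: contra hne => sub; rewrite eqEsubset sub /= sub1set.
    case/set0Pn: Sne => x xS; have := subsetP sub x xS; rewrite in_set1 => /eqP <-.
    exact: xS.
  by case/subsetPn => c cS; rewrite in_set1 => cnz; exists c.
have S_Num0' : S \subset Num0' (2 ^ k) M.
  apply/subsetP => x /imsetP [u]; rewrite inE => /and3P [_ h2 h3] ->.
  by apply: imset_f; rewrite inE h2 h3.
have S_Num0 : S \subset Num0 (2 ^ k) M.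
  apply/subsetP => x /imsetP [u]; rewrite inE => /and3P [_ h2 h3] ->.
  by apply: imset_f; rewrite inE h3.
have scale : forall c, c \in S -> c != 0 -> Fqstar L (2 ^ k) \subset S.
  by move=> c cS cnz; apply/subsetP => d dS; apply: (S_scale hk two0 hM cS cnz dS).
have partb : S = [set 0] <->
   (forall i j : 'I_n, (i < j)%N -> M i i + M i j + M j i + M j j = 0).
  split.
    move=> hS i j lt; have hij : i != j by rewrite neq_ltn lt.
    by have := pairS k two0 M hij; rewrite -/S hS in_set1 => /eqP.
  move=> h; apply/setP => c; rewrite in_set1; apply/idP/eqP.
    by case/(memS k two0) => u [h1 h2 h3 <-]; apply: (partb_r two0 h).
  by move=> ->; have := pairS k two0 M i01; rewrite h.
split.
  split => //.
  have [hS | hS] := eqVneq S [set 0].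
    by left; apply: (subsetP S_Num0'); rewrite hS set11.
  right; case: (nz_elt hS) => c cS cnz.
  exact: subset_trans (scale c cS cnz) S_Num0.
split => //.
move=> hne; split; last split.
- move=> n2; subst n; exact: part_n2.
- by move=> _; case: (nz_elt hne) => c cS cnz; exact: scale c cS cnz.
- move=> h4; apply/eqP; rewrite eqEsubset; apply/andP; split.
    by apply/subsetP => d dS; apply: (S_Fq two0 hM).
  apply/subsetP => d dF; have [->|dnz] := eqVneq d 0; first exact: zero4.
  case: (nz_elt hne) => c cS cnz; apply: (subsetP (scale c cS cnz)).
  by rewrite in_setD1 dnz dF.
Qed.
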